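(* Let $m\ge 2$. Consider either (i) $\xi=\operatorname{diam}$ and $\zeta$ the covering radius $\zeta(\Lambda)=\inf\{t>0:\Lambda+t\mathbf{B}=\mathbb{R}^m\}$, in the undirected case ($\mathcal{G}=C_{\mathbb{Z}^m/\Lambda}(I)$) or the directed case ($\mathcal{G}=C^+_{\mathbb{Z}^m/\Lambda}(I)$) with the corresponding $\mathbf{B}$; or (ii) the directed case, $\xi=\operatorname{girth}$ and $\zeta(\Lambda)=\inf\{t>0:t\mathbf{B}\cap\Lambda\neq\{0\}\}$. Then there is a constant $C$ such that for every finite index subgroup $\Lambda<\mathbb{Z}^m$, $|\xi(\mathcal{G})-\zeta(\Lambda)|\le C$ and $\big||\Lambda|^{-1/m}\xi(\mathcal{G})-\zeta(\bar\Lambda)\big|\le C|\Lambda|^{-1/m}$.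
   Context: $I$ is the standard basis of $\mathbb{Z}^m$; $C_{\mathbb{Z}^m/\Lambda}(I)$ is the Cayley graph of $\mathbb{Z}^m/\Lambda$ with respect to the images of the standard basis vectors ($x$ adjacent to $x+e_j$), and $C^+_{\mathbb{Z}^m/\Lambda}(I)$ the Cayley digraph (edges $x\to x+e_j$), with directed path distance. The diameter is the maximum distance between vertices (ordered pairs in the directed case); the girth of a digraph is the length of a shortest directed cycle. $|\Lambda|$ is the covolume (index) of $\Lambda$ and $\bar\Lambda=|\Lambda|^{-1/m}\Lambda$. $\mathbf{B}=\{v\in\mathbb{R}^m:\sum|v_i|<1\}$ in the undirected case and $\mathbf{B}=\{v\in\mathbb{R}^m:v_i\ge0\ \forall i,\ \sum v_i<1\}$ in the directed case. *)

(* Defs.v *)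
From mathcomp Require Import all_boot all_order all_algebra.
From mathcomp Require Import all_classical all_reals all_analysis.
Set Implicit Arguments. Unset Strict Implicit. Unset Printing Implicit Defensive.
Import Order.TTheory GRing.Theory Num.Theory.
Local Open Scope classical_set_scope.
Local Open Scope ring_scope.

Section Defs.
Variable m : nat.

Definition is_subgroup (L : set 'rV[int]_m) : Prop :=
  L 0 /\ forall x y, L x -> L y -> L (x - y).

(* s is a complete system of pairwise distinct coset representatives of L,
   so (size s) = [Z^m : L] = |L| (covolume/index); its existence is the
   finite-index hypothesis. *)
Definition transversal (L : set 'rV[int]_m) (s : seq 'rV[int]_m) : Prop :=
  (forall x, exists2 r, r \in s & L (x - r)) /\
  (forall i j, (i < size s)%N -> (j < size s)%N ->
      L (nth 0 s i - nth 0 s j) -> i = j).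

Definition ustep (p : 'I_m * bool) : 'rV[int]_m :=
  if p.2 then - delta_mx 0 p.1 else delta_mx 0 p.1.
Definition dstep (j : 'I_m) : 'rV[int]_m := delta_mx 0 j.

Variable R : realType.

(* Path distance in the Cayley graph C_{Z^m/L}(I) between the cosets x+L and
   y+L: least length of a walk x -> x +- e_j1 -> ... ending in the coset y+L. *)
Definition udist (L : set 'rV[int]_m) (x y : 'rV[int]_m) : R :=
  inf [set (size s)%:R | s in
        [set s : seq ('I_m * bool) | L (x + \sum_(p <- s) ustep p - y)]].

Definition ddist (L : set 'rV[int]_m) (x y : 'rV[int]_m) : R :=
  inf [set (size s)%:R | s in
        [set s : seq 'I_m | L (x + \sum_(j <- s) dstep j - y)]].

Definition udiam (L : set 'rV[int]_m) : R :=
  sup [set udist L xy.1 xy.2 | xy in [set: 'rV[int]_m * 'rV[int]_m]].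
Definition ddiam (L : set 'rV[int]_m) : R :=
  sup [set ddist L xy.1 xy.2 | xy in [set: 'rV[int]_m * 'rV[int]_m]].

(* Girth of the digraph: length of a shortest directed cycle, i.e. of a
   shortest nonempty closed directed walk. *)
Definition dgirth (L : set 'rV[int]_m) : R :=
  inf [set (size s)%:R | s in
        [set s : seq 'I_m | s != [::] /\ L (\sum_(j <- s) dstep j)]].

Definition latR (L : set 'rV[int]_m) : set 'rV[R]_m :=
  [set map_mx (fun z : int => z%:~R) x | x in L].
Definition scaleset (c : R) (A : set 'rV[R]_m) : set 'rV[R]_m :=
  [set c *: v | v in A].

Definition ballU : set 'rV[R]_m := [set v | \sum_i `|v 0 i| < 1].
Definition ballD : set 'rV[R]_m :=
  [set v | (forall i, 0 <= v 0 i) /\ \sum_i v 0 i < 1].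

Definition covrad (B : set 'rV[R]_m) (A : set 'rV[R]_m) : R :=
  inf [set t : R | 0 < t /\
        forall v : 'rV[R]_m, exists l b, A l /\ B b /\ v = l + t *: b].

Definition minrad (B : set 'rV[R]_m) (A : set 'rV[R]_m) : R :=
  inf [set t : R | 0 < t /\
        exists v b, A v /\ v != 0 /\ B b /\ v = t *: b].

Definition lemma_claim (xi : set 'rV[int]_m -> R)
    (zeta : set 'rV[R]_m -> R) : Prop :=
  exists C : R, forall (L : set 'rV[int]_m) (s : seq 'rV[int]_m),
    is_subgroup L -> transversal L s ->
    `|xi L - zeta (latR L)| <= C /\
    `|(size s)%:R `^ (- (m%:R)^-1) * xi L
        - zeta (scaleset ((size s)%:R `^ (- (m%:R)^-1)) (latR L))|
      <= C * (size s)%:R `^ (- (m%:R)^-1).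

End Defs.

(* Main.v *)
Require Import Defs.
From mathcomp Require Import all_boot all_order all_algebra.
From mathcomp Require Import all_classical all_reals all_analysis.
From mathcomp Require Import zify ring lra.
Set Implicit Arguments. Unset Strict Implicit. Unset Printing Implicit Defensive.
Import Order.TTheory GRing.Theory Num.Theory.
Local Open Scope classical_set_scope.
Local Open Scope ring_scope.

Section Basics.
Variables (R : realType) (m : nat).

Definition toR (w : 'rV[int]_m) : 'rV[R]_m := map_mx (fun z : int => z%:~R) w.

Lemma toRD a b : toR (a + b) = toR a + toR b.
Proof. by apply/rowP => i; rewrite !mxE intrD. Qed.
Lemma toRB a b : toR (a - b) = toR a - toR b.
Proof. by apply/rowP => i; rewrite !mxE intrB. Qed.
Lemma toR0 : toR 0 = 0.
Proof. by apply/rowP => i; rewrite !mxE. Qed.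

Lemma sgN (L : set 'rV[int]_m) x : is_subgroup L -> L x -> L (- x).
Proof. by move=> hL Lx; rewrite -sub0r; apply: hL.2 => //; exact: hL.1. Qed.
Lemma sgD (L : set 'rV[int]_m) x y : is_subgroup L -> L x -> L y -> L (x + y).
Proof. by move=> hL Lx Ly; rewrite -[y]opprK; apply: hL.2 => //; exact: sgN. Qed.
Lemma sgMn (L : set 'rV[int]_m) x k : is_subgroup L -> L x -> L (x *+ k).
Proof.
move=> hL Lx; elim: k => [|k IH]; first by rewrite mulr0n; exact: hL.1.
by rewrite mulrS; apply: sgD.
Qed.

Lemma snNle n : ~~ (n.+1 <= n)%N. Proof. by rewrite ltnn. Qed.

Lemma pigeon (L : set 'rV[int]_m) s x : is_subgroup L -> Defs.transversal L s ->
  exists2 d : nat, (0 < d)%N & L (x *+ d).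
Proof.
move=> hL [hcov _].
have hf : forall k : 'I_(size s).+1, exists i : 'I_(size s),
    L (x *+ k - nth 0 s i).
  move=> k; have [r rs Lr] := hcov (x *+ k).
  have hi : (index r s < size s)%N by rewrite index_mem.
  by exists (Ordinal hi) => /=; rewrite nth_index.
have [f hf'] := choice hf.
case: (pselect (exists2 d : nat, (0 < d)%N & L (x *+ d))) => // hno.
have finj : injective f.
  move=> k1 k2 e.
  have h12 : L (x *+ k1 - x *+ k2).
    suff -> : x *+ k1 - x *+ k2 = (x *+ k1 - nth 0 s (f k1)) - (x *+ k2 - nth 0 s (f k2)).
      exact: hL.2.
    by rewrite e opprB addrA subrK.
  case: (ltngtP k1 k2) => [lt|lt|/val_inj] //; exfalso; apply: hno.
  - exists (k2 - k1)%N; first by rewrite subn_gt0.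
    rewrite mulrnBr; last exact: ltnW.
    rewrite -opprB; exact: sgN.
  - exists (k1 - k2)%N; first by rewrite subn_gt0.
    by rewrite mulrnBr //; exact: ltnW.
have := leq_card f finj; rewrite !card_ord => h.
by rewrite ltnn in h.
Qed.

End Basics.

Section Gen.
Variables (R : realType) (m : nat) (T : Type) (step : T -> 'rV[int]_m).
Variables (B : set 'rV[R]_m) (P : 'rV[R]_m -> Prop) (psi : 'rV[R]_m -> R).
Hypothesis hm : (0 < m)%N.
Hypothesis hB : forall b, B b <-> (P b /\ psi b < 1).
Hypothesis hPD : forall a b, P a -> P b -> P (a + b).
Hypothesis hPZ : forall k a, 0 <= k -> P a -> P (k *: a).
Hypothesis hpsiZ : forall k a, 0 <= k -> P a -> psi (k *: a) = k * psi a.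
Hypothesis hpsiD : forall a b, P a -> P b -> psi (a + b) <= psi a + psi b.
Hypothesis hpsi0 : forall a, P a -> 0 <= psi a.
Hypothesis hS1 : forall w, P (toR R w) ->
  exists s, \sum_(p <- s) step p = w /\ (size s)%:R = psi (toR R w).
Hypothesis hS2 : forall s, P (toR R (\sum_(p <- s) step p)) /\
  psi (toR R (\sum_(p <- s) step p)) <= (size s)%:R.
Definition floorv (u : 'rV[R]_m) : 'rV[int]_m := \row_i Num.floor (u 0 i).
Hypothesis hfrac : forall u, P (u - toR R (floorv u)) /\
  psi (u - toR R (floorv u)) < m%:R.

Definition gdist (L : set 'rV[int]_m) x y : R :=
  inf [set (size s)%:R | s in
        [set s : seq T | L (x + \sum_(p <- s) step p - y)]].
Definition gdiam (L : set 'rV[int]_m) : R :=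
  sup [set gdist L xy.1 xy.2 | xy in [set: 'rV[int]_m * 'rV[int]_m]].

Variables (L : set 'rV[int]_m) (c : R).
Hypothesis hL : is_subgroup L.
Hypothesis hc : 0 < c.
Hypothesis hT0 : exists K, forall z, exists l, L l /\ P (toR R (z - l)) /\
  psi (toR R (z - l)) <= K.

Let A := scaleset c (latR (R:=R) L).

Lemma Amem l : L l -> A (c *: toR R l).
Proof. by move=> Ll; exists (toR R l) => //; exists l. Qed.

Lemma Ainv a : A a -> exists2 l, L l & a = c *: toR R l.
Proof. by move=> [_ [l Ll <-] <-]; exists l. Qed.

Lemma gdist_ne x y : exists s, L (x + \sum_(p <- s) step p - y).
Proof.
have [K hK] := hT0; have [l [Ll [Pl _]]] := hK (y - x).
have [s [es _]] := hS1 Pl; exists s; rewrite es.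
have -> : x + (y - x - l) - y = - l by apply/rowP => i; rewrite !mxE; ring.
exact: sgN.
Qed.

Lemma gdist_lb x y s : L (x + \sum_(p <- s) step p - y) ->
  gdist L x y <= (size s)%:R.
Proof.
move=> h; apply: ge_inf; last by exists s.
by exists 0 => _ [s' _ <-]; exact: ler0n.
Qed.

Lemma gdist_ge0 x y : 0 <= gdist L x y.
Proof.
apply: lb_le_inf; first by have [s hs] := gdist_ne x y; exists (size s)%:R, s.
by move=> _ [s' _ <-]; exact: ler0n.
Qed.

Let CS := [set t : R | 0 < t /\ forall v : 'rV[R]_m,
   exists l b, A l /\ B b /\ v = l + t *: b].

Lemma key1 t : CS t -> forall x y, c * gdist L x y <= t.
Proof.
move=> [t0 ht] x y.
have [a [b [Aa [Bb e]]]] := ht (c *: toR R (y - x)).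
have [l Ll ea] := Ainv Aa; move/hB: Bb => [Pb psib].
have ew : toR R (y - x - l) = (t / c) *: b.
  have e2 : c *: toR R (y - x - l) = t *: b.
    by rewrite toRB scalerBr e ea addrC addKr.
  apply: (scalerI (lt0r_neq0 hc)) => /=.
  by rewrite e2 scalerA mulrCA mulfV ?lt0r_neq0 // mulr1.
have tc0 : 0 <= t / c by rewrite divr_ge0 // ltW.
have Pw : P (toR R (y - x - l)) by rewrite ew; exact: hPZ.
have [s [es ss]] := hS1 Pw.
have : gdist L x y <= (size s)%:R.
  apply: gdist_lb; rewrite es.
  have -> : x + (y - x - l) - y = - l by apply/rowP => i; rewrite !mxE; ring.
  exact: sgN.
rewrite ss ew hpsiZ // => h.
apply: (le_trans (ler_wpM2l (ltW hc) h)).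
rewrite mulrA (mulrCA c t) mulfV ?lt0r_neq0 // mulr1.
by apply: ler_piMr; [exact: ltW | exact: ltW].
Qed.

Lemma cov_crit K : 0 < K ->
  (forall u, exists l, L l /\ P (u - toR R l) /\ psi (u - toR R l) < K) ->
  CS (c * K).
Proof.
move=> K0 h; split; first exact: mulr_gt0.
move=> v; have [l [Ll [Pl psil]]] := h (c^-1 *: v).
exists (c *: toR R l), (K^-1 *: (c^-1 *: v - toR R l)); split; first exact: Amem.
split.
  apply/hB; split; first by apply: hPZ => //; rewrite invr_ge0 ltW.
  by rewrite hpsiZ ?invr_ge0 ?ltW // mulrC ltr_pdivrMr // mul1r.
rewrite scalerA -mulrA mulfV ?lt0r_neq0 // mulr1 scalerBr scalerA.
by rewrite mulfV ?lt0r_neq0 // scale1r addrCA subrr addr0.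
Qed.

Lemma CS_ne : exists t, CS t.
Proof.
have [K hK] := hT0.
have K0 : 0 <= K.
  have [l [_ [Pl hl]]] := hK 0; exact: le_trans (hpsi0 Pl) hl.
have mK : 0 < K + m%:R by rewrite ltr_wpDl // ltr0n.
exists (c * (K + m%:R)); apply: cov_crit => // u.
have [l [Ll [Pl psil]]] := hK (floorv u).
exists l; split => //.
have -> : u - toR R l = (u - toR R (floorv u)) + toR R (floorv u - l).
  by rewrite toRB addrA subrK.
have [Pf psif] := hfrac u.
split; first exact: hPD.
apply: (le_lt_trans (hpsiD Pf Pl)).
by rewrite addrC; apply: ler_ltD.
Qed.

Let DS := [set gdist L xy.1 xy.2 | xy in [set: 'rV[int]_m * 'rV[int]_m]].

Lemma DS_ub : has_ubound DS.
Proof.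
have [t ht] := CS_ne; exists (t / c) => _ [[x y] _ <-] /=.
by rewrite ler_pdivlMr // mulrC; exact: key1.
Qed.

Lemma gdist_le_diam x y : gdist L x y <= gdiam L.
Proof. by apply: (ub_le_sup DS_ub); exists (x, y). Qed.

Lemma gdiam_ge0 : 0 <= gdiam L.
Proof. exact: le_trans (gdist_ge0 0 0) (gdist_le_diam 0 0). Qed.

Lemma gen_main :
  `|c * gdiam L - covrad B (scaleset c (latR (R:=R) L))| <= c * m%:R.
Proof.
have h1 : c * gdiam L <= covrad B (scaleset c (latR (R:=R) L)).
  apply: lb_le_inf; first exact: CS_ne.
  move=> t ht; rewrite mulrC -ler_pdivlMr //.
  apply: ge_sup; first by exists (gdist L 0 0), (0, 0).
  move=> _ [[x y] _ <-] /=; rewrite ler_pdivlMr // mulrC; exact: key1.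
have h2 : covrad B (scaleset c (latR (R:=R) L)) <= c * (gdiam L + m%:R).
  apply: ge_inf; first by exists 0 => t [t0 _]; exact: ltW.
  apply: cov_crit; first by rewrite ltr_wpDl ?gdiam_ge0 // ltr0n.
  move=> u; set z := floorv u.
  have [Pf psif] := hfrac u.
  set d := m%:R - psi (u - toR R z).
  have d0 : 0 < d by rewrite subr_gt0.
  have [e [s hs <-] he] : exists2 e, [set (size s)%:R | s in
        [set s : seq T | L (0 + \sum_(p <- s) step p - z)]] e &
        e < gdist L 0 z + d.
    apply: inf_adherent => //; split.
      by have [s hs] := gdist_ne 0 z; exists (size s)%:R, s.
    by exists 0 => _ [s' _ <-]; exact: ler0n.
  exists (z - \sum_(p <- s) step p); split.
    have -> : z - \sum_(p <- s) step p = - (0 + \sum_(p <- s) step p - z).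
      by apply/rowP => i; rewrite !mxE; ring.
    exact: sgN.
  have -> : u - toR R (z - \sum_(p <- s) step p) =
      (u - toR R z) + toR R (\sum_(p <- s) step p).
    by rewrite toRB opprB addrCA addrC.
  have [Pw psiw] := hS2 s.
  split; first exact: hPD.
  apply: (le_lt_trans (hpsiD Pf Pw)).
  have := gdist_le_diam 0 z; rewrite /d in he; lra.
rewrite ler_norml; apply/andP; split; last by lra.
by rewrite mulrDr in h2; lra.
Qed.

End Gen.

Lemma sum_nseq (V : nmodType) (I : Type) (F : I -> V) n a :
  \sum_(p <- nseq n a) F p = F a *+ n.
Proof. by elim: n => [|n IH]; rewrite ?big_nil // big_cons IH mulrS. Qed.

Lemma int_sgn (z : int) : (if z < 0 then - 1 else 1) *+ `|z|%N = z.
Proof.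
case: ltrP => h; first by rewrite mulNrn natz ltz0_abs // opprK.
by rewrite natz gez0_abs.
Qed.

Lemma boolRi (R : realType) (b : bool) : ((b%:R : int)%:~R : R) = b%:R.
Proof. by case: b. Qed.

Section Und.
Variables (R : realType) (m : nat).
Definition n1 (v : 'rV[R]_m) : R := \sum_i `|v 0 i|.

Lemma toR_ustep i b : toR R (ustep (i, b)) =
  (if b then - 1 else 1) *: (delta_mx 0 i : 'rV[R]_m).
Proof.
apply/rowP => j; rewrite /ustep /=; case: b; rewrite !mxE ?intrN boolRi.
  by rewrite mulN1r.
by rewrite mul1r.
Qed.

Lemma n1_ustep p : n1 (toR R (ustep p)) = 1.
Proof.
case: p => i b; rewrite /n1 (bigD1 i) //= big1 ?addr0.
  by rewrite toR_ustep !mxE !eqxx /= mulr1 ; case: b; rewrite ?normrN normr1.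
move=> j ji; rewrite toR_ustep !mxE eqxx (negbTE ji) /= mulr0 normr0 //.
Qed.

Lemma n1_ge0 v : 0 <= n1 v.
Proof. by apply: sumr_ge0 => i _. Qed.

Lemma n1D a b : n1 (a + b) <= n1 a + n1 b.
Proof.
rewrite /n1 -big_split /=; apply: ler_sum => i _; rewrite mxE; exact: ler_normD.
Qed.

Lemma n1Z k a : 0 <= k -> n1 (k *: a) = k * n1 a.
Proof.
move=> k0; rewrite /n1 mulr_sumr; apply: eq_bigr => i _.
by rewrite mxE normrM ger0_norm.
Qed.

Lemma uS1 (w : 'rV[int]_m) : exists s : seq ('I_m * bool),
  \sum_(p <- s) ustep p = w /\ (size s)%:R = n1 (toR R w).
Proof.
exists (flatten [seq nseq (absz (w 0 i)) (i, w 0 i < 0) | i <- index_enum 'I_m]).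
split.
  rewrite big_flatten big_map /=.
  apply/rowP => j; rewrite summxE (bigD1 j) //= [X in _ + X]big1 ?addr0.
    rewrite sum_nseq mulmxnE -[RHS]int_sgn; congr (_ *+ _).
    by rewrite /ustep /=; case: (w 0 j < 0); rewrite !mxE !eqxx.
  move=> i ij; rewrite sum_nseq mulmxnE.
  rewrite /ustep /=; case: (w 0 i < 0); rewrite !mxE eqxx eq_sym (negbTE ij) /=.
    by rewrite oppr0 mul0rn.
  by rewrite mul0rn.
rewrite size_flatten sumnE /shape -map_comp big_map natr_sum /n1.
apply: eq_bigr => i _.
by rewrite /= size_nseq mxE natr_absz intr_norm.
Qed.

Lemma uS2 s : n1 (toR R (\sum_(p <- s) ustep p)) <= (size s)%:R.
Proof.
elim: s => [|p s IH]; first by rewrite big_nil toR0 /n1 big1 // => i _; rewrite mxE normr0.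
rewrite big_cons toRD /= mulrS.
by apply: (le_trans (n1D _ _)); rewrite n1_ustep lerD2l.
Qed.

Lemma ufrac (u : 'rV[R]_m) : (0 < m)%N -> n1 (u - toR R (floorv u)) < m%:R.
Proof.
move=> hm; rewrite /n1 -[X in _ < X%:R]card_ord -sumr_const.
apply: ltr_sum.
  by apply/hasP; exists (Ordinal hm); rewrite ?mem_index_enum.
move=> i _; rewrite !mxE ger0_norm ?subr_ge0 ?floor_le_tmp //.
by have := lt_succ_floor (u 0 i); rewrite intrD1; lra.
Qed.

End Und.

Lemma natRi (R : realType) (n : nat) : ((n%:R : int)%:~R : R) = n%:R.
Proof. by rewrite mulrz_nat. Qed.

Section UT0.
Variables (R : realType) (m : nat).

Lemma n1_le_sum (s : seq 'rV[int]_m) r : r \in s ->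
  n1 (toR R r) <= \sum_(r <- s) n1 (toR R r).
Proof.
move=> rs; rewrite (big_rem r rs) /= lerDl; apply: sumr_ge0 => *; exact: n1_ge0.
Qed.

Lemma uT0 (L : set 'rV[int]_m) s : is_subgroup L -> Defs.transversal L s ->
  exists K, forall z, exists l, L l /\ True /\ n1 (toR R (z - l)) <= K.
Proof.
move=> hL [hcov _]; exists (\sum_(r <- s) n1 (toR R r)) => z.
have [r rs Lr] := hcov z; exists (z - r); split => //; split => //.
have -> : z - (z - r) = r by rewrite opprB addrC subrK.
exact: n1_le_sum.
Qed.

Definition psD (v : 'rV[R]_m) : R := \sum_i v 0 i.
Definition PD (v : 'rV[R]_m) : Prop := forall i, 0 <= v 0 i.

Lemma toR_dstep j : toR R (dstep j) = (delta_mx 0 j : 'rV[R]_m).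
Proof. by apply/rowP => i; rewrite !mxE boolRi. Qed.

Lemma psD_delta j : psD (delta_mx 0 j : 'rV[R]_m) = 1.
Proof.
rewrite /psD (bigD1 j) //= big1 ?addr0; first by rewrite !mxE !eqxx.
by move=> i ij; rewrite !mxE eqxx (negbTE ij).
Qed.

Lemma psD_D a b : psD (a + b) = psD a + psD b.
Proof. by rewrite /psD -big_split; apply: eq_bigr => i _; rewrite mxE. Qed.

Lemma psD_Z k a : psD (k *: a) = k * psD a.
Proof. by rewrite /psD mulr_sumr; apply: eq_bigr => i _; rewrite mxE. Qed.

Lemma PD_D a b : PD a -> PD b -> PD (a + b).
Proof. by move=> ha hb i; rewrite mxE addr_ge0. Qed.

Lemma PD_Z k a : 0 <= k -> PD a -> PD (k *: a).
Proof. by move=> k0 ha i; rewrite mxE mulr_ge0. Qed.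

Lemma psD_ge0 a : PD a -> 0 <= psD a.
Proof. by move=> ha; apply: sumr_ge0 => i _. Qed.

Lemma dsum_psD s : psD (toR R (\sum_(j <- s) dstep j)) = (size s)%:R.
Proof.
elim: s => [|j s IH]; first by rewrite big_nil toR0 /psD big1 // => i _; rewrite mxE.
by rewrite big_cons toRD psD_D IH toR_dstep psD_delta /= mulrS.
Qed.

Lemma dsum_PD s : PD (toR R (\sum_(j <- s) dstep j)).
Proof.
elim: s => [|j s IH]; first by rewrite big_nil toR0 => i; rewrite mxE.
rewrite big_cons toRD; apply: PD_D => // i.
by rewrite toR_dstep mxE ler0n.
Qed.

Lemma dS1 (w : 'rV[int]_m) : PD (toR R w) -> exists s : seq 'I_m,
  \sum_(p <- s) dstep p = w /\ (size s)%:R = psD (toR R w).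
Proof.
move=> hw.
have hw' : forall i, 0 <= w 0 i by move=> i; have := hw i; rewrite mxE ler0z.
exists (flatten [seq nseq (absz (w 0 i)) i | i <- index_enum 'I_m]).
split.
  rewrite big_flatten big_map /=.
  apply/rowP => j; rewrite summxE (bigD1 j) //= [X in _ + X]big1 ?addr0.
    by rewrite sum_nseq mulmxnE !mxE !eqxx /= ?mulr1n natz gez0_abs.
  move=> i ij; rewrite sum_nseq mulmxnE.
  by rewrite !mxE eqxx eq_sym (negbTE ij) /= mul0rn.
rewrite size_flatten sumnE /shape -map_comp big_map natr_sum /psD.
apply: eq_bigr => i _.
by rewrite /= size_nseq mxE natr_absz intr_norm ger0_norm // ler0z.
Qed.

Lemma dfrac (u : 'rV[R]_m) : (0 < m)%N ->
  PD (u - toR R (floorv u)) /\ psD (u - toR R (floorv u)) < m%:R.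
Proof.
move=> hm; split.
  by move=> i; rewrite !mxE subr_ge0 floor_le_tmp.
rewrite /psD -[X in _ < X%:R]card_ord -sumr_const.
apply: ltr_sum.
  by apply/hasP; exists (Ordinal hm); rewrite ?mem_index_enum.
move=> i _; rewrite !mxE.
by have := lt_succ_floor (u 0 i); rewrite intrD1; lra.
Qed.

Lemma dT0 (L : set 'rV[int]_m) s : is_subgroup L -> Defs.transversal L s ->
  exists K, forall z, exists l, L l /\ PD (toR R (z - l)) /\
     psD (toR R (z - l)) <= K.
Proof.
move=> hL hs.
have [d d0 Ld] := pigeon (const_mx 1) hL hs.
set K1 := \sum_(r <- s) n1 (toR R r).
have K10 : 0 <= K1 by apply: sumr_ge0 => *; exact: n1_ge0.
set N := Num.bound K1.
have hN : K1 < N%:R by apply: archi_boundP.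
set X : 'rV[int]_m := const_mx (d * N)%N%:R.
have LX : L X.
  have -> : X = (const_mx 1 *+ d) *+ N.
    by apply/rowP => i; rewrite !mulmxnE !mxE -mulrnA.
  exact: sgMn.
have hdN : (N%:R : R) <= (d * N)%N%:R by rewrite ler_nat leq_pmull.
exists (K1 + (d * N)%N%:R *+ m) => z.
have [r rs Lr] := hs.1 z.
exists (z - r - X); split; first exact: hL.2.
have -> : z - (z - r - X) = r + X by apply/rowP => i; rewrite !mxE; ring.
have hX : toR R X = const_mx (d * N)%N%:R.
  by apply/rowP => i; rewrite !mxE natRi.
have hr : n1 (toR R r) <= K1 by exact: n1_le_sum.
split.
  move=> i; rewrite toRD hX !mxE.
  have h1 : `|toR R r 0 i| <= n1 (toR R r).
    by rewrite /n1 (bigD1 i) //= lerDl; apply: sumr_ge0 => *.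
  have h2 := ler_norm (- (toR R r 0 i)); rewrite normrN in h2.
  rewrite mxE in h1 h2; lra.
rewrite toRD psD_D hX.
have -> : psD (const_mx (d * N)%N%:R) = (d * N)%N%:R *+ m.
  by rewrite /psD (eq_bigr (fun _ => (d * N)%N%:R)) ?sumr_const ?card_ord // => i _; rewrite mxE.
rewrite lerD2r; apply: le_trans hr.
by apply: ler_sum => i _; exact: ler_norm.
Qed.

End UT0.

Lemma psD_Dle (R : realType) m (a b : 'rV[R]_m) : psD (a + b) <= psD a + psD b.
Proof. by rewrite psD_D. Qed.
Lemma dsum_psD_le (R : realType) m (s : seq 'I_m) :
  psD (toR R (\sum_(j <- s) dstep j)) <= (size s)%:R.
Proof. by rewrite dsum_psD. Qed.

Section Girth.
Variables (R : realType) (m : nat).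
Hypothesis hm : (0 < m)%N.
Variables (L : set 'rV[int]_m) (s0 : seq 'rV[int]_m) (c : R).
Hypothesis hL : is_subgroup L.
Hypothesis hs : Defs.transversal L s0.
Hypothesis hc : 0 < c.

Lemma GS_ne : exists s : seq 'I_m, s != [::] /\ L (\sum_(j <- s) dstep j).
Proof.
have [d d0 Ld] := pigeon (const_mx 1) hL hs.
have Pw : PD (toR R (const_mx 1 *+ d : 'rV[int]_m)).
  by move=> i; rewrite mxE mulmxnE mxE ler0z; exact: mulrn_wge0.
have [s [es ss]] := dS1 Pw.
exists s; split; last by rewrite es.
apply/eqP => s0'; move: es; rewrite s0' big_nil => /rowP/(_ (Ordinal hm)).
rewrite mulmxnE !mxE => /eqP; rewrite eq_sym pnatr_eq0 => /eqP d00.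
by rewrite d00 in d0.
Qed.

Lemma MSmem s : s != [::] -> L (\sum_(j <- s) dstep j) ->
  [set t : R | 0 < t /\
        exists v b, (scaleset c (latR (R:=R) L)) v /\ v != 0 /\ (@ballD m R) b /\ v = t *: b]
  (c * ((size s)%:R + 1)).
Proof.
move=> sn Ls; set w := \sum_(j <- s) dstep j.
have s0' : (0 < size s)%N by case: s sn {Ls w}.
set t := c * ((size s)%:R + 1).
have t0 : 0 < t by rewrite mulr_gt0 // ltr_wpDl // ler0n.
split => //.
exists (c *: toR R w), (t^-1 *: (c *: toR R w)); split.
  by exists (toR R w) => //; exists w.
split.
  apply/eqP => v0.
  have := congr1 (@psD R m) v0; rewrite psD_Z dsum_psD.
  have -> : psD (0 : 'rV[R]_m) = 0 by rewrite /psD big1 // => i _; rewrite mxE.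
  move/eqP; rewrite mulf_eq0 (negbTE (lt0r_neq0 hc)) /= pnatr_eq0 => /eqP sz.
  by rewrite sz in s0'.
split.
  change (PD (t^-1 *: (c *: toR R w)) /\ psD (t^-1 *: (c *: toR R w)) < 1).
  split.
    apply: PD_Z; first by rewrite invr_ge0 ltW.
    apply: PD_Z; [exact: ltW | exact: dsum_PD].
  rewrite !psD_Z dsum_psD mulrC ltr_pdivrMr // mul1r /t ltr_pM2l //.
  by rewrite ltrDl ltr01.
by rewrite scalerA mulfV ?lt0r_neq0 // scale1r.
Qed.

Lemma memMS s : s != [::] -> L (\sum_(j <- s) dstep j) ->
  minrad (@ballD m R) (scaleset c (latR (R:=R) L)) <= c * ((size s)%:R + 1).
Proof.
move=> sn Ls; apply: ge_inf; first by exists 0 => x [x0 _]; exact: ltW.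
exact: MSmem.
Qed.

Lemma girth_main :
  `|c * @dgirth m R L - minrad (@ballD m R) (scaleset c (latR (R:=R) L))| <= c * 1.
Proof.
set mr := minrad _ _.
have h1 : mr / c - 1 <= @dgirth m R L.
  apply: lb_le_inf.
    by have [s [sn Ls]] := GS_ne; exists (size s)%:R, s.
  move=> _ [s [sn Ls] <-].
  rewrite lerBlDr ler_pdivrMr // mulrC; exact: memMS.
have h2 : c * @dgirth m R L <= mr.
  apply: lb_le_inf.
    have [s [sn Ls]] := GS_ne; exists (c * ((size s)%:R + 1)).
    exact: MSmem.
  move=> t [t0 [v [b [Av [v0 [[Pb sb] e]]]]]].
  have [l Ll ea] : exists2 l, L l & v = c *: toR R l.
    by case: Av => _ [l Ll <-] <-; exists l.
  have el : toR R l = (t / c) *: b.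
    apply: (scalerI (lt0r_neq0 hc)) => /=.
    by rewrite -ea e scalerA mulrCA mulfV ?lt0r_neq0 // mulr1.
  have tc0 : 0 <= t / c by rewrite divr_ge0 // ltW.
  have Pl : PD (toR R l) by rewrite el; exact: PD_Z.
  have [s [es ss]] := dS1 Pl.
  have sn : s != [::].
    apply/eqP => s00; move: v0; rewrite ea -es s00 big_nil toR0 scaler0.
    by rewrite eqxx.
  have : @dgirth m R L <= (size s)%:R.
    apply: ge_inf; first by exists 0 => _ [s' _ <-]; exact: ler0n.
    by exists s => //; split => //; rewrite es.
  rewrite ss el psD_Z => hg.
  apply: (le_trans (ler_wpM2l (ltW hc) hg)).
  rewrite mulrA (mulrCA c t) mulfV ?lt0r_neq0 // mulr1.
  apply: ler_piMr; first exact: ltW.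
  exact: ltW.
have h3 : mr <= c * (@dgirth m R L + 1).
  rewrite -ler_pdivrMl //; lra.
rewrite mulrDr mulr1 in h3.
move: h2 h3; set X := c * @dgirth m R L => h2 h3.
rewrite mulr1 ler_norml; apply/andP; split; lra.
Qed.

End Girth.

Lemma sc1 (R : realType) m (A : set 'rV[R]_m) : scaleset 1 A = A.
Proof.
rewrite /scaleset; apply/seteqP; split => [_ [v Av <-]|v Av]; first by rewrite scale1r.
by exists v => //; rewrite scale1r.
Qed.

Lemma claim_of (R : realType) m (xi : set 'rV[int]_m -> R)
  (zeta : set 'rV[R]_m -> R) (C : R) :
  (forall L s c, is_subgroup L -> Defs.transversal L s -> 0 < c ->
     `|c * xi L - zeta (scaleset c (latR (R:=R) L))| <= c * C) ->
  lemma_claim xi zeta.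
Proof.
move=> h; exists C => L s hL hs; split.
  by have := h L s 1 hL hs ltr01; rewrite !mul1r sc1.
have sz : (0 < size s)%N.
  by have [r rs _] := hs.1 0; case: s {hs} rs.
rewrite [C * _]mulrC; apply: (h L s) => //.
by apply: powR_gt0; rewrite ltr0n.
Qed.

Theorem lemma3p3 (R : realType) (m : nat) (hm : (2 <= m)%N) :
  (* (i) undirected: diameter vs covering radius for the cross-polytope *)
  lemma_claim (@udiam m R) (@covrad m R (@ballU m R)) /\
  (* (i) directed: diameter vs covering radius for the simplex *)
  lemma_claim (@ddiam m R) (@covrad m R (@ballD m R)) /\
  (* (ii) directed: girth vs first minimum for the simplex *)
  lemma_claim (@dgirth m R) (@minrad m R (@ballD m R)).
Proof.
have hm0 : (0 < m)%N by apply: leq_trans hm.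
split; [|split].
- apply: (@claim_of R m _ _ m%:R) => L s c hL hs hc.
  have hB : forall b, @ballU m R b <-> (True /\ @n1 R m b < 1).
    by move=> b; split => [h|[_ h]].
  have H := (@gen_main R m _ (@ustep m) (@ballU m R) (fun _ => True) (@n1 R m) hm0 hB
    (fun _ _ _ _ => I) (fun _ _ _ _ => I) (fun k a k0 _ => n1Z a k0)
    (fun a b _ _ => n1D a b) (fun a _ => n1_ge0 a) (fun w _ => uS1 R w)
    (fun s => conj I (uS2 R s)) (fun u => conj I (ufrac u hm0))
    L c hL hc (uT0 R hL hs)).
  exact H.
- apply: (@claim_of R m _ _ m%:R) => L s c hL hs hc.
  have hB : forall b, @ballD m R b <-> (@PD R m b /\ @psD R m b < 1).
    by move=> b; split.
  have H := (@gen_main R m _ (@dstep m) (@ballD m R) (@PD R m) (@psD R m) hm0 hB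
    (@PD_D R m) (@PD_Z R m) (fun k a _ _ => psD_Z k a)
    (fun a b _ _ => psD_Dle a b) (@psD_ge0 R m) (@dS1 R m)
    (fun s => conj (dsum_PD R s) (dsum_psD_le R s))
    (fun u => dfrac u hm0)
    L c hL hc (dT0 R hL hs)).
  exact H.
- apply: (@claim_of R m _ _ 1) => L s c hL hs hc.
  exact: (girth_main hm0 hL hs hc).
Qed.
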